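(* Let $\mathbf b=\sum_{j=1}^mv_j\mathbf a_j\in\mathcal B$ ($v_j\in[0,1)$) and $u\in M$ with $u-\mathbf b\in\mathbb ZA_+$. Let $\sigma_{\mathbf b}$ be the smallest closed face of $C(A)$ containing $\mathbf b$, and suppose $\sigma_{\mathbf b}\neq C(A)$. Then $G^{(\mathbf b)}_u(\lambda)$ is a nonzero constant if and only if $u=\mathbf b+\sum_{\{j:\mathbf a_j\in\sigma_{\mathbf b}\}}t_j\mathbf a_j$ for (unique) $t_j\in\mathbb Z_{\ge0}$, in which case \[G^{(\mathbf b)}_u(\lambda)=\Big(\prod_{\{j:\mathbf a_j\in\sigma_{\mathbf b}\}}\ell_j^{-t_j}\Big)\Big(\prod_{\{j:\mathbf a_j\in\sigma_{\mathbf b}\}}[-v_j]_{-t_j}\Big).\] If $u$ is not of this form, then $G^{(\mathbf b)}_u(\lambda)=0$.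
   Context: Let $A=\{\mathbf a_1,\dots,\mathbf a_m\}\subseteq\mathbb Z^n$ be linearly independent over $\mathbb R$, $\mathbf a_0\in\mathbb Z^n$, and $\ell_0,\dots,\ell_m$ positive integers with gcd $1$, $\ell_0\mathbf a_0=\sum_{j=1}^m\ell_j\mathbf a_j$, $\ell_0=\sum_{j=1}^m\ell_j$. Let $\mathbb ZA_+$ be the group generated by $A\cup\{\mathbf a_0\}$. Let $V$ be the real span of $A$, $V_{\mathbb Z}=V\cap\mathbb Z^n$, $C(A)$ the closed real cone generated by $A$, $M=V_{\mathbb Z}\cap C(A)$, $P(A)=\{\sum_jc_j\mathbf a_j:0\le c_j<1\}$, $\mathcal B=V_{\mathbb Z}\cap P(A)$. For $z\in\mathbb C$, $l\in\mathbb Z$: $[z]_0=1$, $[z]_l=1/((z+1)\cdots(z+l))$ for $l>0$, $[z]_l=z(z-1)\cdots(z+l+1)$ for $l<0$. For $\mathbf b=\sum_jv_j\mathbf a_j\in\mathcal B$ and $w\in M$, let $g^{(\mathbf b)}_w=\prod_j[-v_j]_{s_j}\ell_j^{s_j}$ if $w=\sum_j(v_j-s_j)\mathbf a_j$ with all $s_j\in\mathbb Z_{\le0}$, and $0$ otherwise; and $G^{(\mathbf b)}_u(\lambda)=\sum_{s\ge0}g^{(\mathbf b)}_{u+s\mathbf a_0}\frac{(-\ell_0\lambda)^s}{s!}\in\mathbb C[[\lambda]]$. *)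

(* Defs.v *)
From HB Require Import structures.
From mathcomp Require Import all_boot all_order all_algebra.
From mathcomp Require Import boolp classical_sets reals.
Set Implicit Arguments. Unset Strict Implicit. Unset Printing Implicit Defensive.
Import Order.TTheory GRing.Theory Num.Theory.
Local Open Scope ring_scope.
Local Open Scope classical_set_scope.

Section Defs.
Variables (R : realType) (n m : nat).

Definition toR (x : 'rV[int]_n) : 'rV[R]_n := map_mx (fun z : int => z%:~R) x.

Definition dotR (x y : 'rV[R]_n) : R := \sum_(i < n) x 0 i * y 0 i.

Definition lin_indep (a : 'I_m -> 'rV[int]_n) : Prop :=
  forall c : 'I_m -> R, \sum_(j < m) c j *: toR (a j) = 0 -> forall j, c j = 0.

Definition spanA (a : 'I_m -> 'rV[int]_n) : set 'rV[R]_n :=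
  [set x | exists c : 'I_m -> R, x = \sum_(j < m) c j *: toR (a j)].

(* C(A) = real cone generated by A (a finitely generated cone, hence closed) *)
Definition coneA (a : 'I_m -> 'rV[int]_n) : set 'rV[R]_n :=
  [set x | exists c : 'I_m -> R, (forall j, 0 <= c j) /\
             x = \sum_(j < m) c j *: toR (a j)].

Definition VZ (a : 'I_m -> 'rV[int]_n) : set 'rV[int]_n :=
  [set x | spanA a (toR x)].

Definition MA (a : 'I_m -> 'rV[int]_n) : set 'rV[int]_n :=
  [set x | VZ a x /\ coneA a (toR x)].

Definition ZAplus (a0 : 'rV[int]_n) (a : 'I_m -> 'rV[int]_n) : set 'rV[int]_n :=
  [set x | exists (k0 : int) (k : 'I_m -> int),
             x = k0 *: a0 + \sum_(j < m) k j *: a j].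

Definition is_face (C F : set 'rV[R]_n) : Prop :=
  exists phi : 'rV[R]_n, (forall x, C x -> 0 <= dotR phi x) /\
    F = [set x | C x /\ dotR phi x = 0].

Definition smallest_face (C : set 'rV[R]_n) (b : 'rV[R]_n) : set 'rV[R]_n :=
  [set x | forall F, is_face C F -> F b -> F x].

Definition bracket (z : R) (l : int) : R :=
  match l with
  | Posz k => (\prod_(i < k) (z + i.+1%:R))^-1
  | Negz k => \prod_(i < k.+1) (z - i%:R)
  end.

(* g^{(b)}_w, where b = sum_j v_j a_j *)
Definition gb (a : 'I_m -> 'rV[int]_n) (l : 'I_m -> nat) (v : 'I_m -> R)
    (w : 'rV[int]_n) : R :=
  match pselect (exists s : 'I_m -> int, (forall j, s j <= 0) /\
             toR w = \sum_(j < m) (v j - (s j)%:~R) *: toR (a j)) with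
  | left H => let s := projT1 (cid H) in
              \prod_(j < m) (bracket (- v j) (s j) * (l j)%:R ^ (s j))
  | right _ => 0
  end.

(* coefficient of lambda^s in G^{(b)}_u(lambda) =
   sum_{s>=0} g^{(b)}_{u + s a_0} (-l_0 lambda)^s / s! *)
Definition Gcoef (a0 : 'rV[int]_n) (a : 'I_m -> 'rV[int]_n) (l0 : nat)
    (l : 'I_m -> nat) (v : 'I_m -> R) (u : 'rV[int]_n) (s : nat) : R :=
  gb a l v (u + a0 *+ s) * (- (l0%:R)) ^+ s / (s`!)%:R.

End Defs.

(* Main.v *)
Require Import Defs.
From HB Require Import structures.
From mathcomp Require Import all_boot all_order all_algebra.
From mathcomp Require Import boolp classical_sets reals.
Import Order.TTheory GRing.Theory Num.Theory.
Local Open Scope ring_scope.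
Local Open Scope classical_set_scope.
Set Implicit Arguments. Unset Strict Implicit. Unset Printing Implicit Defensive.

Lemma toRD (R : realType) n (x y : 'rV[int]_n) : toR R (x + y) = toR R x + toR R y.
Proof. by apply/matrixP => i j; rewrite !mxE intrD. Qed.
Lemma toR0 (R : realType) n : toR R (0 : 'rV[int]_n) = 0.
Proof. by apply/matrixP => i j; rewrite !mxE. Qed.
Lemma toRZ (R : realType) n (k : int) (x : 'rV[int]_n) : toR R (k *: x) = k%:~R *: toR R x.
Proof. by apply/matrixP => i j; rewrite !mxE intrM. Qed.
Lemma toRN (R : realType) n (x : 'rV[int]_n) : toR R (- x) = - toR R x.
Proof. by apply/matrixP => i j; rewrite !mxE intrN. Qed.
Lemma toRMn (R : realType) n (x : 'rV[int]_n) s : toR R (x *+ s) = toR R x *+ s.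
Proof. elim: s => [|s IH]; first by rewrite !mulr0n toR0. by rewrite !mulrS toRD IH. Qed.
Lemma toR_inj (R : realType) n : injective (toR R (n:=n)).
Proof. move=> x y /matrixP H; apply/matrixP => i j; move: (H i j); rewrite !mxE; exact: intr_inj. Qed.
Lemma toR_sum (R : realType) n m (P : pred 'I_m) (F : 'I_m -> 'rV[int]_n) :
  toR R (\sum_(j < m | P j) F j) = \sum_(j < m | P j) toR R (F j).
Proof. exact: (big_morph _ (@toRD R n) (@toR0 R n)). Qed.
Lemma dotRD (R : realType) n (p x y : 'rV[R]_n) : dotR p (x + y) = dotR p x + dotR p y.
Proof. by rewrite /dotR -big_split; apply: eq_bigr => i _; rewrite mxE mulrDr. Qed.
Lemma dotR0 (R : realType) n (p : 'rV[R]_n) : dotR p 0 = 0.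
Proof. by rewrite /dotR big1 // => i _; rewrite mxE mulr0. Qed.
Lemma dotRZ (R : realType) n (p x : 'rV[R]_n) k : dotR p (k *: x) = k * dotR p x.
Proof. by rewrite /dotR mulr_sumr; apply: eq_bigr => i _; rewrite mxE mulrCA. Qed.
Lemma dotR_sum (R : realType) n m (p : 'rV[R]_n) (c : 'I_m -> R) (F : 'I_m -> 'rV[R]_n) :
  dotR p (\sum_(j < m) c j *: F j) = \sum_(j < m) c j * dotR p (F j).
Proof.
rewrite (big_morph _ (@dotRD R n p) (@dotR0 R n p)); apply: eq_bigr => j _; exact: dotRZ.
Qed.
Lemma coord_uniq (R : realType) n m (a : 'I_m -> 'rV[int]_n) (c d : 'I_m -> R) :
  lin_indep R a -> \sum_(j < m) c j *: toR R (a j) = \sum_(j < m) d j *: toR R (a j) ->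
  forall j, c j = d j.
Proof.
move=> Hl E j; apply/eqP; rewrite -subr_eq0; apply/eqP; apply: (Hl (fun j => c j - d j)).
by rewrite (eq_bigr (fun j => c j *: toR R (a j) - d j *: toR R (a j))) ?sumrB ?E ?subrr // => i _; rewrite scalerBl.
Qed.
Lemma dual_vec (R : realType) n m (a : 'I_m -> 'rV[int]_n) :
  lin_indep R a -> forall j0, exists phi : 'rV[R]_n,
  forall k, dotR phi (toR R (a k)) = (k == j0)%:R.
Proof.
move=> Hl j0.
pose A := \matrix_(k < m, i < n) toR R (a k) 0 i.
have rowA k : row k A = toR R (a k).
  by apply/matrixP => i j; rewrite !mxE ord1.
have : row_free A.
  rewrite -kermx_eq0; apply/eqP/matrixP => r k; rewrite [RHS]mxE.
  have H := mulmx_ker A.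
  have Hr : row r (kermx A) *m A = 0 by rewrite -row_mul H row0.
  rewrite mulmx_sum_row in Hr.
  have := Hl (fun k => row r (kermx A) 0 k); rewrite -(eq_bigr _ (fun k _ => congr1 _ (rowA k))).
  by move=> /(_ Hr k); rewrite mxE.
case/row_freeP => B HB.
exists (\row_i B i j0) => k.
rewrite /dotR -rowA.
have := congr1 (fun M : 'M[R]_m => M k j0) HB; rewrite !mxE => <-.
by apply: eq_bigr => i _; rewrite !mxE mulrC.
Qed.

Lemma sum_delta (R : realType) n m (F : 'I_m -> 'rV[R]_n) j :
  \sum_(k < m) (k == j)%:R *: F k = F j.
Proof.
rewrite (bigD1 j) //= eqxx scale1r big1 ?addr0 // => k /negbTE ->; by rewrite scale0r.
Qed.

Lemma aj_in_cone (R : realType) n m (a : 'I_m -> 'rV[int]_n) j : coneA a (toR R (a j)).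
Proof.
exists (fun k => (k == j)%:R); split; last by rewrite sum_delta.
by move=> k; case: (k == j).
Qed.

Lemma face_zero (R : realType) n m (a : 'I_m -> 'rV[int]_n) (v : 'I_m -> R) (b : 'rV[R]_n) phi :
  (forall j, 0 <= v j) -> b = \sum_(j < m) v j *: toR R (a j) ->
  (forall x, coneA a x -> 0 <= dotR phi x) -> dotR phi b = 0 ->
  forall j, 0 < v j -> dotR phi (toR R (a j)) = 0.
Proof.
move=> v0 Hb Hphi Hd j vj.
have H0 : forall k, predT k -> 0 <= v k * dotR phi (toR R (a k)).
  by move=> k _; rewrite mulr_ge0 // Hphi //; apply: aj_in_cone.
have Hs : \sum_(k < m | predT k) v k * dotR phi (toR R (a k)) = 0 by rewrite -dotR_sum -Hb.
have Hj : v j * dotR phi (toR R (a j)) = 0 by apply: (psumr_eq0P H0 Hs).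
move: Hj => /eqP; rewrite mulf_eq0 => /orP[|/eqP//].
by rewrite gt_eqF.
Qed.

Lemma sigma_char (R : realType) n m (a : 'I_m -> 'rV[int]_n) (v : 'I_m -> R) (b : 'rV[int]_n) :
  lin_indep R a -> (forall j, 0 <= v j) -> toR R b = \sum_(j < m) v j *: toR R (a j) ->
  forall j, smallest_face (coneA a) (toR R b) (toR R (a j)) <-> 0 < v j.
Proof.
move=> Hl v0 Hb j; split; last first.
  move=> vj F [phi [Hphi ->]] [Cb Db]; split; first exact: aj_in_cone.
  exact: (face_zero v0 Hb Hphi Db).
move=> Hs; rewrite lt_def v0 andbT; apply/negP => /eqP vj0.
have [phi Hphi] := dual_vec Hl j.
have dotC c : dotR phi (\sum_(k < m) c k *: toR R (a k)) = c j.
  rewrite dotR_sum (bigD1 j) //= Hphi eqxx mulr1 big1 ?addr0 // => k /negbTE kj.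
  by rewrite Hphi kj mulr0.
have := Hs [set x | coneA a x /\ dotR phi x = 0].
case.
- exists phi; split => // x [c [c0 ->]]; by rewrite dotC.
- split; first by exists v; split.
  by rewrite Hb dotC.
- by move=> _; rewrite Hphi eqxx => /eqP; rewrite oner_eq0.
Qed.

Lemma sigma_full (R : realType) n m (a : 'I_m -> 'rV[int]_n) (v : 'I_m -> R) (b : 'rV[int]_n) :
  (forall j, 0 < v j) -> toR R b = \sum_(j < m) v j *: toR R (a j) ->
  smallest_face (coneA a) (toR R b) = coneA a.
Proof.
move=> vp Hb; have v0 j : 0 <= v j by apply: ltW.
apply/seteqP; split => x.
  move=> /(_ [set x | coneA a x /\ dotR 0 x = 0]); case => //.
  - exists 0; split => // y _; by rewrite /dotR big1 // => i _; rewrite mxE mul0r.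
  - split; first by exists v; split.
    by rewrite /dotR big1 // => i _; rewrite mxE mul0r.
move=> [c [c0 ->]] F [phi [Hphi ->]] [Cb Db]; split; first by exists c.
rewrite dotR_sum big1 // => k _.
by rewrite (face_zero v0 Hb Hphi Db) ?mulr0.
Qed.

Lemma bracket0 (R : realType) (z : R) : bracket z 0 = 1.
Proof. by rewrite (_ : (0:int) = Posz 0) // /bracket big_ord0 invr1. Qed.

Lemma bracket_zero (R : realType) (s : int) : s < 0 -> bracket (0 : R) s = 0.
Proof.
case: s => // k _; rewrite /bracket big_ord_recl /= subrr mul0r //.
Qed.

Lemma bracket_neq0 (R : realType) (z : R) (s : int) : z < 0 -> s <= 0 -> bracket z s != 0.
Proof.
move=> z0; case: s => [k|k] /=.
  rewrite lez_nat leqn0 => /eqP ->; rewrite /bracket big_ord0 invr1; exact: oner_neq0.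
move=> _; rewrite /bracket; apply/prodf_neq0 => i _.
by rewrite lt_eqF // subr_lt0 (lt_le_trans z0) // ler0n.
Qed.

Lemma gbE (R : realType) n m (a : 'I_m -> 'rV[int]_n) (l : 'I_m -> nat) (v : 'I_m -> R) w s :
  lin_indep R a -> (forall j, s j <= 0) ->
  toR R w = \sum_(j < m) (v j - (s j)%:~R) *: toR R (a j) ->
  gb a l v w = \prod_(j < m) (bracket (- v j) (s j) * (l j)%:R ^ (s j)).
Proof.
move=> Hl s0 Hw; rewrite /gb; case: pselect => [H|[]]; last by exists s.
case: (cid H) => s1 [_ Hs1] /=.
have E j : s1 j = s j.
  have := coord_uniq Hl (etrans (esym Hs1) Hw) j.
  by move=> /(congr1 (fun x => v j - x)); rewrite !subKr => /intr_inj.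
by apply: eq_bigr => j _; rewrite E.
Qed.

Lemma gb_nz (R : realType) n m (a : 'I_m -> 'rV[int]_n) (l : 'I_m -> nat) (v : 'I_m -> R) w :
  lin_indep R a -> gb a l v w != 0 ->
  exists s, [/\ (forall j, s j <= 0),
    toR R w = \sum_(j < m) (v j - (s j)%:~R) *: toR R (a j) &
    \prod_(j < m) (bracket (- v j) (s j) * (l j)%:R ^ (s j)) != 0].
Proof.
move=> Hl; rewrite /gb; case: pselect => [H|]; last by rewrite eqxx.
case: (cid H) => s [s0 Hs] /= Hp; by exists s.
Qed.
Theorem corollary4p16 (R : realType) (n m : nat)
  (a0 : 'rV[int]_n) (a : 'I_m -> 'rV[int]_n) (l0 : nat) (l : 'I_m -> nat)
  (b : 'rV[int]_n) (v : 'I_m -> R) (u : 'rV[int]_n) :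
  lin_indep R a ->
  (0 < l0)%N -> (forall j, 0 < l j)%N ->
  gcdn l0 (\big[gcdn/0%N]_(j < m) l j) = 1%N ->
  (l0%:Z) *: a0 = \sum_(j < m) (l j)%:Z *: a j ->
  l0 = (\sum_(j < m) l j)%N ->
  (forall j, 0 <= v j < 1) ->
  toR R b = \sum_(j < m) v j *: toR R (a j) ->
  MA R a u ->
  ZAplus a0 a (u - b) ->
  smallest_face (coneA (R:=R) a) (toR R b) <> coneA (R:=R) a ->
  let sigma := smallest_face (coneA (R:=R) a) (toR R b) in
  let rep (t : 'I_m -> nat) :=
    u = b + \sum_(j < m | toR R (a j) \in sigma) (t j)%:Z *: a j in
  [/\ ((Gcoef a0 a l0 l v u 0 != 0 /\ forall s, (0 < s)%N -> Gcoef a0 a l0 l v u s = 0)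
        <-> exists t, rep t),
      (forall t t', rep t -> rep t' -> forall j, toR R (a j) \in sigma -> t j = t' j),
      (forall t, rep t ->
         Gcoef a0 a l0 l v u 0 =
         (\prod_(j < m | toR R (a j) \in sigma) (l j)%:R ^ (- (t j)%:Z)) *
         (\prod_(j < m | toR R (a j) \in sigma) bracket (- v j) (- (t j)%:Z)))
    & (~ (exists t, rep t)) -> forall s, Gcoef a0 a l0 l v u s = 0].
Proof.
move=> Hl l0p lp _ Ha0 _ Hv Hb [_ [c [c0 Hu]]] _ Hsig sigma rep.
have v0 j : 0 <= v j by case/andP: (Hv j).
have HS j : (toR R (a j) \in sigma) = (0 < v j).
  apply/idP/idP => [/set_mem /(sigma_char Hl v0 Hb) //|/(sigma_char Hl v0 Hb) H].
  exact: mem_set.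
have [j0 vj0] : exists j0, v j0 = 0.
  apply: contra_notP Hsig => Hn; apply: sigma_full Hb => j.
  rewrite lt_def v0 andbT; apply/eqP => E; apply: Hn; by exists j.
have zero_s s1 : \prod_(j < m) (bracket (- v j) (s1 j) * (l j)%:R ^ (s1 j)) != 0 ->
    (forall j, s1 j <= 0) -> forall j, v j = 0 -> s1 j = 0.
  move=> Hp s0 j vj; apply/eqP; apply: contraNT Hp => Hne; apply/eqP.
  by rewrite (bigD1 j) //= vj oppr0 bracket_zero ?mul0r // lt_neqAle Hne s0.
have Gpos s : (0 < s)%N -> Gcoef a0 a l0 l v u s = 0.
  move=> sp; rewrite /Gcoef.
  suff -> : gb a l v (u + a0 *+ s) = 0 by rewrite !mul0r.
  apply/eqP; apply/negP => /negP /(gb_nz Hl) [sx [sx0 Hw Hp]].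
  have sj0 := zero_s sx Hp sx0 j0 vj0.
  have E1 : (l0%:R : R) *: toR R a0 = \sum_(k < m) (l k)%:R *: toR R (a k).
    rewrite -[l0%:R]/((l0%:Z)%:~R : R) -toRZ Ha0 toR_sum; apply: eq_bigr => k _; by rewrite toRZ.
  have Heq : \sum_(k < m) (l0%:R * c k + (l k)%:R *+ s) *: toR R (a k) =
      \sum_(k < m) (l0%:R * (v k - (sx k)%:~R)) *: toR R (a k).
    transitivity ((l0%:R : R) *: toR R (u + a0 *+ s)); last first.
      rewrite Hw scaler_sumr; apply: eq_bigr => k _; by rewrite scalerA.
    rewrite toRD toRMn scalerDr -scalerMnr E1 Hu scaler_sumr -sumrMnl -big_split.
    by apply: eq_bigr => k _; rewrite scalerDl scalerA scalerMnl.
  have := coord_uniq Hl Heq j0; rewrite /= vj0 sj0 subrr mulr0 => /eqP.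
  rewrite gt_eqF //.
  by rewrite ltr_wpDl ?mulr_ge0 // pmulrn_rgt0 // ltr0n.
have G0 : Gcoef a0 a l0 l v u 0 = gb a l v u.
  by rewrite /Gcoef mulr0n addr0 expr0 fact0 mulr1 divr1.
pose st (t : 'I_m -> nat) j : int := if 0 < v j then - (t j)%:Z else 0.
have st0 t j : st t j <= 0 by rewrite /st; case: ifP => // _; rewrite oppr_le0.
have repP t : rep t -> toR R u = \sum_(j < m) (v j - (st t j)%:~R) *: toR R (a j).
  rewrite /rep => ->; rewrite toRD toR_sum Hb (eq_bigl _ _ HS) [X in _ + X]big_mkcond -big_split.
  apply: eq_bigr => j _ /=; rewrite /st; case: ifP => _.
    by rewrite toRZ intrN opprK scalerDl.
  by rewrite subr0 addr0.
have val t : rep t -> gb a l v u =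
    (\prod_(j < m | toR R (a j) \in sigma) (l j)%:R ^ (- (t j)%:Z)) *
    (\prod_(j < m | toR R (a j) \in sigma) bracket (- v j) (- (t j)%:Z)).
  move=> Ht; rewrite (gbE l Hl (st0 t) (repP t Ht)) !(eq_bigl _ _ HS).
  rewrite (bigID (fun j => 0 < v j)) /= [X in _ * X]big1 ?mulr1; last first.
    by move=> j /negbTE vj; rewrite /st vj bracket0 expr0z mulr1.
  rewrite -big_split /=; apply: eq_bigr => j vj; by rewrite /st vj mulrC.
have nz t : rep t -> gb a l v u != 0.
  move=> Ht; rewrite (gbE l Hl (st0 t) (repP t Ht)); apply/prodf_neq0 => j _.
  rewrite mulf_neq0 // ?expfz_neq0 ?pnatr_eq0 -?lt0n ?lp //.
  rewrite /st; case: ifP => vj; last by rewrite bracket0 oner_eq0.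
  by rewrite bracket_neq0 // ?oppr_lt0 // oppr_le0.
have conv : Gcoef a0 a l0 l v u 0 != 0 -> exists t, rep t.
  rewrite G0 => /(gb_nz Hl) [s [s0 Hw Hp]].
  exists (fun j => `|s j|%N); apply: (@toR_inj R).
  rewrite Hw toRD toR_sum Hb (eq_bigl _ _ HS) [X in _ + X]big_mkcond -big_split.
  apply: eq_bigr => j _ /=; case: ifP => vj.
    by rewrite toRZ scalerDl lez0_abs ?s0 // intrN.
  have vj0' : v j = 0 by apply/eqP; rewrite eq_le v0 andbT leNgt vj.
  by rewrite (zero_s s Hp s0 j vj0') vj0' subr0 addr0.
split.
- split; first by case => /conv.
  case=> t Ht; split; first by rewrite G0 (nz t).
  exact: Gpos.
- move=> t t' Ht Ht' j; rewrite HS => vj.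
  have := coord_uniq Hl (etrans (esym (repP t Ht)) (repP t' Ht')) j.
  move=> /(congr1 (fun x => v j - x)); rewrite !subKr => /intr_inj.
  by rewrite /st vj => /oppr_inj [].
- by move=> t Ht; rewrite G0 (val t Ht).
move=> Hn [|s]; last exact: Gpos.
apply/eqP/negPn/negP => H0; apply: Hn; exact: conv H0.
Qed.
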